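(* Let $f:\mathit{Ref}\to\mathit{Expr}$ be a well-formed spreadsheet and let $\mathcal{L}=\{l : l \text{ is a label used in } f(r) \text{ for some } r\in\mathit{Ref}\}$. Then there are $|\mathcal{L}|$ or fewer random variables that cover all random variables used by the executions of $f$; i.e., every random draw made during any execution of $f$ (from the empty state $\emptyset$ to a state with domain $\mathit{Ref}$) is the draw at some labelled application whose label belongs to $\mathcal{L}$, and each such label is used for at most one draw per execution.
   Context: Expressions of the abstract spreadsheet language are generated by the grammar $$e ::= c \mid r \mid \mathit{op}_l(e_1,\dots,e_n) \mid \mathbf{if}\; e_1\, e_2\, e_3 \mid \mathbf{obs}(c, \mathit{erp}_l(e_1,\dots,e_n)),\qquad \mathit{op} ::= \mathit{prim} \mid \mathit{black} \mid \mathit{erp},$$ where $c$ ranges over constant numbers, $r$ over cell references, $l$ over labels (each application carries a unique label), $\mathit{prim}$ over deterministic primitive operators, $\mathit{black}$ over user-defined (possibly stochastic) black-box operators, and $\mathit{erp}$ over elementary random procedures (Gaussian, Choice, Between, Near). A spreadsheet is a finite map $f:\mathit{Ref}\to\mathit{Expr}$; it is well-formed if the directed graph on $\mathit{Ref}$ with edges $\{(r,r'): r\text{ occurs in } f(r')\}$ is acyclic. Fix a topological enumeration of $\mathit{Ref}$ and write $\prec$ for its order. A state $\rho$ is a map from a $\prec$-downward-closed subset $\mathrm{dom}(\rho)\subseteq\mathit{Ref}$ to numbers. Evaluation $e\Downarrow_\rho c,(p,q,\Lambda,L)$ evaluates expression $e$ in state $\rho$ to a number $c$, with $L$ the sequence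 of labels of the applications at which random values were sampled or observed: a reference $r$ evaluates to $\rho(r)$ with $L=[]$; $\mathit{prim}_l(e_1,\dots,e_n)$ evaluates the arguments and applies $\mathit{prim}$, with $L$ the concatenation of the arguments' sequences; $\mathit{black}_l(e_1,\dots,e_n)$ evaluates the arguments, samples $c\sim\mathit{black}(c_1,\dots,c_n)$, and has $L=\mathit{concat}(L_1,\dots,L_n,[l])$; $\mathit{erp}_l(e_1,\dots,e_n)$ evaluates the arguments, samples $c$ from a proposal distribution associated with $l$, and has $L=\mathit{concat}(L_1,\dots,L_n,[l])$; $\mathbf{if}\;e_1\,e_2\,e_3$ evaluates $e_1$ and then $e_2$ if the result is nonzero, otherwise $e_3$, with $L$ the concatenation of the two evaluated subexpressions' sequences; $\mathbf{obs}(c,\mathit{erp}_l(e_1,\dots,e_n))$ evaluates the arguments, returns $c$ and has $L=\mathit{concat}(L_1,\dots,L_n,[l])$. (The components $p,q$ are accumulated log densities and $\Lambda$ gradient information.) A one-step spreadsheet evaluation $\rho\xrightarrow{p,q,\Lambda,L}_f\rho'$ picks the $\prec$-least $r\in\mathit{Ref}\setminus\mathrm{dom}(\rho)$, evaluates $f(r)\Downarrow_\rho c,(p,q,\Lambda,L)$, and sets $\rho'=\rho[r:c]$. An execution of $f$ is a sequence $\emptyset=\rho_1\xrightarrow{}_f\rho_2\cdots\xrightarrow{}_f\rho_{m+1}$ with $\mathrm{dom}(\rho_{m+1})=\mathit{Ref}$; the random variables it uses are those sampled at the labels in the recorded sequences $L_1,\dots,L_m$. *)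

(* Defs.v *)
From Stdlib Require Import Reals List Relations.
Import ListNotations.
Open Scope R_scope.

Inductive erp : Type := Gaussian | Choice | Between | Near.

Section Spreadsheet.
(* Ref: cell references; Lab: labels; PrimT: deterministic primitives;
   BlackT: user-defined (possibly stochastic) black-box operators. *)
Variables (Ref Lab PrimT BlackT : Type).

Inductive op : Type :=
  | Prim (p : PrimT)
  | Black (b : BlackT)
  | Erp (d : erp).

Inductive expr : Type :=
  | Const (c : R)
  | RefE (r : Ref)
  | App (o : op) (l : Lab) (args : list expr)
  | If (e1 e2 e3 : expr)
  | Obs (c : R) (d : erp) (l : Lab) (args : list expr).  (* obs(c, erp_l(e1..en)) *)

Fixpoint labels (e : expr) : list Lab :=
  match e with
  | Const _ => []
  | RefE _ => []
  | App _ l args =>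
      (fix go (a : list expr) : list Lab :=
         match a with [] => [] | x :: xs => labels x ++ go xs end) args ++ [l]
  | If e1 e2 e3 => labels e1 ++ labels e2 ++ labels e3
  | Obs _ _ l args =>
      (fix go (a : list expr) : list Lab :=
         match a with [] => [] | x :: xs => labels x ++ go xs end) args ++ [l]
  end.

Fixpoint refs (e : expr) : list Ref :=
  match e with
  | Const _ => []
  | RefE r => [r]
  | App _ _ args =>
      (fix go (a : list expr) : list Ref :=
         match a with [] => [] | x :: xs => refs x ++ go xs end) args
  | If e1 e2 e3 => refs e1 ++ refs e2 ++ refs e3
  | Obs _ _ _ args =>
      (fix go (a : list expr) : list Ref :=
         match a with [] => [] | x :: xs => refs x ++ go xs end) args
  end.

Definition spreadsheet := Ref -> expr.

Definition dep_edge (f : spreadsheet) (r r' : Ref) : Prop := In r (refs (f r')).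
Definition well_formed (f : spreadsheet) : Prop :=
  forall r, ~ clos_trans Ref (dep_edge f) r r.

Definition prec (ord : list Ref) (r r' : Ref) : Prop :=
  exists i j, nth_error ord i = Some r /\ nth_error ord j = Some r' /\ (i < j)%nat.

Definition topological_enumeration (f : spreadsheet) (ord : list Ref) : Prop :=
  NoDup ord /\ (forall r, In r ord) /\
  (forall r r', dep_edge f r r' -> prec ord r r').

Definition state := Ref -> option R.
Definition empty_state : state := fun _ => None.

Variable Ref_eq_dec : forall r r' : Ref, {r = r'} + {r <> r'}.
Definition upd (rho : state) (r : Ref) (c : R) : state :=
  fun r' => if Ref_eq_dec r' r then Some c else rho r'.

(* semantics parameters: primitive functions, support of black boxes,
   and the proposal distribution (support) associated with each label *)
Variable prim_sem : PrimT -> list R -> R.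
Variable black_sample : BlackT -> list R -> R -> Prop.
Variable erp_proposal : Lab -> erp -> list R -> R -> Prop.

(* e ⇓_rho c, L  (the density / gradient components are omitted) *)
Inductive eval (rho : state) : expr -> R -> list Lab -> Prop :=
  | ev_const c : eval rho (Const c) c []
  | ev_ref r c : rho r = Some c -> eval rho (RefE r) c []
  | ev_prim p l args cs Ls :
      evals rho args cs Ls ->
      eval rho (App (Prim p) l args) (prim_sem p cs) (concat Ls)
  | ev_black b l args cs Ls c :
      evals rho args cs Ls -> black_sample b cs c ->
      eval rho (App (Black b) l args) c (concat Ls ++ [l])
  | ev_erp d l args cs Ls c :
      evals rho args cs Ls -> erp_proposal l d cs c ->
      eval rho (App (Erp d) l args) c (concat Ls ++ [l])
  | ev_if_true e1 e2 e3 c1 L1 c L2 :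
      eval rho e1 c1 L1 -> c1 <> 0 -> eval rho e2 c L2 ->
      eval rho (If e1 e2 e3) c (L1 ++ L2)
  | ev_if_false e1 e2 e3 c1 L1 c L3 :
      eval rho e1 c1 L1 -> c1 = 0 -> eval rho e3 c L3 ->
      eval rho (If e1 e2 e3) c (L1 ++ L3)
  | ev_obs c d l args cs Ls :
      evals rho args cs Ls ->
      eval rho (Obs c d l args) c (concat Ls ++ [l])
with evals (rho : state) : list expr -> list R -> list (list Lab) -> Prop :=
  | evs_nil : evals rho [] [] []
  | evs_cons e es c cs L Ls :
      eval rho e c L -> evals rho es cs Ls -> evals rho (e :: es) (c :: cs) (L :: Ls).

Definition step (f : spreadsheet) (ord : list Ref) (rho : state) (L : list Lab)
    (rho' : state) : Prop :=
  exists r c,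
    rho r = None /\
    (forall r', rho r' = None -> r' <> r -> prec ord r r') /\
    eval rho (f r) c L /\
    rho' = upd rho r c.

Inductive run (f : spreadsheet) (ord : list Ref) : state -> list (list Lab) -> state -> Prop :=
  | run_nil rho : run f ord rho [] rho
  | run_cons rho L rho1 Ls rho2 :
      step f ord rho L rho1 -> run f ord rho1 Ls rho2 -> run f ord rho (L :: Ls) rho2.

Definition execution (f : spreadsheet) (ord : list Ref) (Ls : list (list Lab)) : Prop :=
  exists rho', run f ord empty_state Ls rho' /\ forall r, rho' r <> None.

Definition all_labels (f : spreadsheet) (ord : list Ref) : list Lab :=
  flat_map (fun r => labels (f r)) ord.

End Spreadsheet.

Arguments Const {Ref Lab PrimT BlackT}.
Arguments well_formed {Ref Lab PrimT BlackT}.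
Arguments topological_enumeration {Ref Lab PrimT BlackT}.
Arguments all_labels {Ref Lab PrimT BlackT}.
Arguments execution {Ref Lab PrimT BlackT}.
Arguments step {Ref Lab PrimT BlackT}.
Arguments run {Ref Lab PrimT BlackT}.
Arguments eval {Ref Lab PrimT BlackT}.
Arguments evals {Ref Lab PrimT BlackT}.

(* Main.v *)
Require Import Defs.
From Stdlib Require Import Reals List Relations Permutation Lia.
Import ListNotations.

Definition subperm {A} (x y : list A) := exists z, Permutation (x ++ z) y.

Lemma subperm_app {A} (a b c d : list A) : subperm a b -> subperm c d -> subperm (a ++ c) (b ++ d).
Proof.
  intros [z1 H1] [z2 H2]. exists (z1 ++ z2).
  rewrite <- H1, <- H2. rewrite <- !app_assoc. apply Permutation_app_head.
  rewrite !app_assoc. apply Permutation_app_tail. apply Permutation_app_comm.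
Qed.

Lemma subperm_appr {A} (a b c : list A) : subperm a b -> subperm a (b ++ c).
Proof. intros [z H]. exists (z ++ c). rewrite app_assoc. now apply Permutation_app_tail. Qed.

Lemma subperm_refl {A} (a : list A) : subperm a a.
Proof. exists []. rewrite app_nil_r. apply Permutation_refl. Qed.

Section S.
Variables (Ref Lab PrimT BlackT : Type)
  (Ref_eq_dec : forall r r' : Ref, {r = r'} + {r <> r'})
  (prim_sem : PrimT -> list R -> R)
  (black_sample : BlackT -> list R -> R -> Prop)
  (erp_proposal : Lab -> erp -> list R -> R -> Prop).

Fixpoint labs (a : list (expr Ref Lab PrimT BlackT)) : list Lab :=
  match a with [] => [] | x :: xs => labels Ref Lab PrimT BlackT x ++ labs xs end.

Scheme eval_ind2 := Induction for eval Sort Prop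
  with evals_ind2 := Induction for evals Sort Prop.

Lemma eval_sub rho e c L :
  eval prim_sem black_sample erp_proposal rho e c L ->
  subperm L (labels Ref Lab PrimT BlackT e).
Proof.
  revert e c L.
  apply (eval_ind2 Ref Lab PrimT BlackT prim_sem black_sample erp_proposal rho
    (fun e c L _ => subperm L (labels Ref Lab PrimT BlackT e))
    (fun es cs Ls _ => subperm (concat Ls) (labs es))); simpl; intros.
  - apply subperm_refl.
  - apply subperm_refl.
  - change (subperm (concat Ls) (labs args ++ [l])). now apply subperm_appr.
  - change (subperm (concat Ls ++ [l]) (labs args ++ [l])). apply subperm_app; auto. apply subperm_refl.
  - change (subperm (concat Ls ++ [l]) (labs args ++ [l])). apply subperm_app; auto. apply subperm_refl.
  - apply subperm_app; auto. now apply subperm_appr.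
  - apply subperm_app; auto. match goal with Hs : subperm ?L3 (labels _ _ _ _ e3) |- _ => destruct Hs as [z Hz] end.
    exists (z ++ labels Ref Lab PrimT BlackT e2). rewrite app_assoc, Hz. apply Permutation_app_comm.
  - change (subperm (concat Ls ++ [l]) (labs args ++ [l])). apply subperm_app; auto. apply subperm_refl.
  - apply subperm_refl.
  - apply subperm_app; auto.
Qed.

Definition isNone (rho : state Ref) r := match rho r with None => true | Some _ => false end.

Lemma perm_upd (g : Ref -> list Lab) ord rho r c :
  NoDup ord -> In r ord -> rho r = None ->
  Permutation (flat_map g (filter (isNone rho) ord))
    (g r ++ flat_map g (filter (isNone (upd Ref Ref_eq_dec rho r c)) ord)).
Proof.
  assert (Eu : forall y, isNone (upd Ref Ref_eq_dec rho r c) y = if Ref_eq_dec y r then false else isNone rho y).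
  { intros y. unfold isNone, upd. destruct (Ref_eq_dec y r); reflexivity. }
  induction ord as [|x ord IH]; intros Hnd Hin Hr; [destruct Hin|].
  inversion Hnd; subst.
  simpl. rewrite Eu.
  destruct (Ref_eq_dec x r) as [->|Hne].
  - assert (Hn : isNone rho r = true) by (unfold isNone; now rewrite Hr).
    rewrite Hn. simpl. apply Permutation_app_head.
    rewrite (filter_ext_in (isNone (upd Ref Ref_eq_dec rho r c)) (isNone rho)); [apply Permutation_refl|].
    intros y Hy. rewrite Eu. destruct (Ref_eq_dec y r); congruence.
  - destruct Hin as [->|Hin]; [congruence|].
    destruct (isNone rho x); simpl.
    + rewrite IH by auto. rewrite !app_assoc. apply Permutation_app_tail.
      apply Permutation_app_comm.
    + now apply IH.
Qed.

Lemma run_sub f ord rho Ls rho2 :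
  NoDup ord -> (forall r, In r ord) ->
  run Ref_eq_dec prim_sem black_sample erp_proposal f ord rho Ls rho2 ->
  subperm (concat Ls) (flat_map (fun r => labels Ref Lab PrimT BlackT (f r)) (filter (isNone rho) ord)).
Proof.
  intros Hnd Hall H. induction H.
  - exists (flat_map (fun r => labels Ref Lab PrimT BlackT (f r)) (filter (isNone rho) ord)).
    apply Permutation_refl.
  - destruct H as (r & c & Hr & _ & Hev & ->).
    simpl. destruct (eval_sub _ _ _ _ Hev) as [z1 H1].
    destruct IHrun as [z2 H2].
    exists (z1 ++ z2).
    rewrite (perm_upd _ _ _ _ c Hnd (Hall r) Hr).
    rewrite <- H1, <- H2. rewrite <- !app_assoc. apply Permutation_app_head.
    rewrite !app_assoc. apply Permutation_app_tail. apply Permutation_app_comm.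
Qed.
End S.

Theorem mainTheorem2
  (Ref Lab PrimT BlackT : Type)
  (Ref_eq_dec : forall r r' : Ref, {r = r'} + {r <> r'})
  (prim_sem : PrimT -> list R -> R)
  (black_sample : BlackT -> list R -> R -> Prop)
  (erp_proposal : Lab -> erp -> list R -> R -> Prop)
  (f : spreadsheet Ref Lab PrimT BlackT) (ord : list Ref)
  (Hwf : well_formed f)
  (Htopo : topological_enumeration f ord)
  (Huniq : NoDup (all_labels f ord)) :
  forall Ls : list (list Lab),
    execution Ref_eq_dec prim_sem black_sample erp_proposal f ord Ls ->
    (forall l, In l (concat Ls) -> In l (all_labels f ord)) /\
    NoDup (concat Ls) /\
    (length (concat Ls) <= length (all_labels f ord))%nat.
Proof.
  intros Ls [rho' [Hrun _]].
  destruct Htopo as [Hnd [Hall _]].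
  destruct (run_sub _ _ _ _ _ _ _ _ _ _ _ _ _ Hnd Hall Hrun) as [z Hz].
  assert (Hf : filter (isNone Ref (empty_state Ref)) ord = ord).
  { clear. induction ord as [|x o IH]; simpl; [reflexivity|]. now rewrite IH. }
  rewrite Hf in Hz. fold (all_labels f ord) in Hz.
  split; [|split].
  - intros l Hl. apply (Permutation_in _ Hz). apply in_or_app. now left.
  - apply Permutation_sym in Hz. apply (Permutation_NoDup Hz) in Huniq.
    now apply NoDup_app_remove_r in Huniq.
  - apply Permutation_length in Hz. rewrite length_app in Hz. lia.
Qed.
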